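(* Let $\mathcal{D}$, $\mathcal{X}$ be finite sets and $\mathcal{Y}=\{0,1\}$. Let $q_{D,X,Y}$ be the true distribution of the data on $\mathcal{D}\times\mathcal{X}\times\mathcal{Y}$, and let $p_{D,X,Y}$ be the empirical distribution of $n$ i.i.d. samples from $q_{D,X,Y}$. Let $p_{\hat X,\hat Y|X,Y,D}$ be a randomized mapping (conditional distribution from $\mathcal{D}\times\mathcal{X}\times\mathcal{Y}$ to $\mathcal{X}\times\mathcal{Y}$) determined from $p_{D,X,Y}$; denote by $p_{D,\hat X,\hat Y}$ (with marginals/conditionals $p_{\hat Y|D}$, $p_{\hat X,\hat Y}$) the joint distribution of $(D,\hat X,\hat Y)$ when the mapping is applied to $(D,X,Y)\sim p_{D,X,Y}$, and by $q_{D,\hat X,\hat Y}$ (with $q_{\hat Y|D}$, $q_{\hat X,\hat Y}$) the corresponding distribution when it is applied to $(D,X,Y)\sim q_{D,X,Y}$. Let $p_{Y_T}$ be a target distribution on $\mathcal{Y}$, let $J(p,q)=|p/q-1|$, and let $\Delta(p_{X,Y},p_{\hat X,\hat Y})=\sum_{x,y}|p_{X,Y}(x,y)-p_{\hat X,\hat Y}(x,y)|$. Suppose that for all $y\in\mathcal{Y}$, $d\in\mathcal{D}$ we have $p_{Y,D}(y,d)>0$ and $J\big(p_{\hat Y|D}(y|d),p_{Y_T}(y)\big)\le\epsilon$, and that $\Delta(p_{X,Y},p_{\hat X,\hat Y})\le\mu$. Then with probability $1-\beta$, \[ J\big(q_{\hat Y|D}(y|d),p_{Y_T}(y)\big)=\epsilon+O\!\left(\sqrt{\tfrac{1}{n}\log\tfrac{n}{\beta}}\right),\qquad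 \Delta\big(q_{X,Y},q_{\hat X,\hat Y}\big)=\mu+O\!\left(\sqrt{\tfrac{1}{n}\log\tfrac{n}{\beta}}\right), \] where the constants in the $O(\cdot)$ terms depend on the alphabet size $|\mathcal{D}||\mathcal{X}||\mathcal{Y}|$ and on the minimum probability $\min_{y,d}p_{D,\hat Y}(d,y)$, which are treated as fixed (the latter bounded away from zero).
   Context: $D$ denotes discriminatory variables, $X$ features, $Y$ a binary outcome; the mapping $p_{\hat X,\hat Y|X,Y,D}$ transforms $(X,Y)$ into $(\hat X,\hat Y)$ while retaining $D$. *)

(* Defs.v *)
From HB Require Import structures.
From mathcomp Require Import all_boot all_order all_algebra.
From mathcomp Require Import boolp reals exp.
Set Implicit Arguments. Unset Strict Implicit. Unset Printing Implicit Defensive.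
Import Order.TTheory GRing.Theory Num.Theory.
Local Open Scope ring_scope.

Section Defs.
Variables (R : realType) (D X : finType).

Definition jdist := D -> X -> bool -> R.

Definition is_dist (A : finType) (f : A -> R) :=
  (forall a, 0 <= f a) /\ \sum_a f a = 1.

Definition is_jdist (p : jdist) :=
  (forall d x y, 0 <= p d x y) /\ \sum_d \sum_x \sum_y p d x y = 1.

(* randomized mapping p_{Xhat,Yhat | D,X,Y} : K d x y x' y' *)
Definition kernel := D -> X -> bool -> X -> bool -> R.

Definition is_kernel (K : kernel) :=
  (forall d x y x' y', 0 <= K d x y x' y') /\
  (forall d x y, \sum_x' \sum_y' K d x y x' y' = 1).

Definition push (p : jdist) (K : kernel) : jdist :=
  fun d x' y' => \sum_x \sum_y p d x y * K d x y x' y'.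

Definition marg_D (p : jdist) (d : D) : R := \sum_x \sum_y p d x y.
Definition marg_YD (p : jdist) (y : bool) (d : D) : R := \sum_x p d x y.
Definition marg_XY (p : jdist) (x : X) (y : bool) : R := \sum_d p d x y.

Definition marg_DYhat (p : jdist) (K : kernel) (d : D) (y : bool) : R :=
  marg_YD (push p K) y d.
Definition cond_Yhat_D (p : jdist) (K : kernel) (y : bool) (d : D) : R :=
  marg_DYhat p K d y / marg_D p d.

Definition J (a b : R) : R := `| a / b - 1 |.

Definition Delta (f g : X -> bool -> R) : R :=
  \sum_x \sum_y `| f x y - g x y |.

Definition empirical (n : nat) (s : {ffun 'I_n -> (D * X * bool)%type}) : jdist :=
  fun d x y => #|[set i | s i == (d, x, y)]|%:R / n%:R.

Definition sample_prob (q : jdist) (n : nat)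
    (E : {ffun 'I_n -> (D * X * bool)%type} -> Prop) : R :=
  \sum_(s : {ffun 'I_n -> (D * X * bool)%type} | `[< E s >])
     \prod_(i < n) q (s i).1.1 (s i).1.2 (s i).2.

End Defs.

(* Main.v *)
Require Import Defs.
From HB Require Import structures.
From mathcomp Require Import all_boot all_order all_algebra.
From mathcomp Require Import boolp reals exp.
From mathcomp Require Import sequences lra ring.
Import Order.TTheory GRing.Theory Num.Theory.
Local Open Scope ring_scope.

Section Gen.
Context {R : realType}.

Lemma sum_pull (I J K : finType) (F : I -> J -> K -> R) :
  \sum_i \sum_j \sum_k F i j k = \sum_k \sum_i \sum_j F i j k.
Proof.
under eq_bigr => i _ do rewrite exchange_big.
by rewrite exchange_big.
Qed.

Lemma le_sum_term (I : finType) (F : I -> R) (i0 : I) :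
  (forall i, 0 <= F i) -> F i0 <= \sum_i F i.
Proof.
move=> h; rewrite (bigD1 i0) //= lerDl; apply: sumr_ge0 => i _; exact: h.
Qed.

Lemma expR_le_quad (x : R) : `|x| <= 1/2 -> expR x <= 1 + x + 2 * x ^+ 2.
Proof.
move=> hx.
have h1 := expR_ge1Dx (- x).
have hxb : -(1/2) <= x <= 1/2 by rewrite -ler_norml.
case/andP: hxb => hx1 hx2.
have hp : 0 < 1 - x by lra.
have e : expR x = (expR (- x))^-1 by rewrite expRN invrK.
rewrite e.
have hq : 0 < expR (- x) := expR_gt0 _.
rewrite -(@ler_pM2r _ (expR (-x))) // mulVf ?gt_eqF //.
apply: (le_trans _ (ler_wpM2l _ h1)); last first.
  have : 0 <= x ^+ 2 by apply: sqr_ge0.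
  lra.
have : 0 <= x ^+ 2 by apply: sqr_ge0.
rewrite expr2 => h.
nra.
Qed.

End Gen.

Section S.
Context {R : realType} {D X : finType}.
Notation atom := (D * X * bool)%type.

Definition qa (q : jdist R D X) (b : atom) := q b.1.1 b.1.2 b.2.

Lemma sum_curry (f : D -> X -> bool -> R) :
  \sum_(b : atom) f b.1.1 b.1.2 b.2 = \sum_d \sum_x \sum_y f d x y.
Proof.
rewrite -(pair_big xpredT xpredT (fun dx y => f dx.1 dx.2 y)) /=.
by rewrite -(pair_big xpredT xpredT (fun d x => \sum_y f d x y)).
Qed.

Lemma expect_prod (q : jdist R D X) n (g : atom -> R) :
  \sum_(s : {ffun 'I_n -> atom}) (\prod_(i < n) qa q (s i)) * \prod_(i < n) g (s i)
  = (\sum_b qa q b * g b) ^+ n.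
Proof.
under eq_bigr => s _ do rewrite -big_split /=.
rewrite -(bigA_distr_bigA (fun (i : 'I_n) b => qa q b * g b)) /=.
by rewrite prodr_const card_ord.
Qed.

Lemma count_sum n (s : {ffun 'I_n -> atom}) a :
  (#|[set i | s i == a]|%:R : R) = \sum_i (s i == a)%:R.
Proof.
rewrite -sum1_card natr_sum big_mkcond /=; apply: eq_bigr => i _.
by rewrite inE; case: (s i == a).
Qed.

Lemma count_total n (s : {ffun 'I_n -> atom}) :
  \sum_a (#|[set i | s i == a]|%:R : R) = n%:R.
Proof.
under eq_bigr => a _ do rewrite count_sum.
rewrite exchange_big /=.
rewrite (eq_bigr (fun _ => 1)) ?sumr_const ?card_ord //.
move=> i _; rewrite (bigD1 (s i)) //= eqxx big1 ?addr0 // => a /negbTE.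
by rewrite eq_sym => ->.
Qed.

Lemma empirical_total n (s : {ffun 'I_n -> atom}) : (0 < n)%N ->
  \sum_d \sum_x \sum_y empirical R s d x y = 1.
Proof.
move=> hn; rewrite -(sum_curry (empirical R s)) /empirical.
under eq_bigr => b _ do rewrite -!surjective_pairing.
rewrite -mulr_suml count_total divff // pnatr_eq0 -lt0n //.
Qed.

Lemma empirical_ge0 n (s : {ffun 'I_n -> atom}) d x y : 0 <= empirical R s d x y.
Proof. by rewrite /empirical divr_ge0. Qed.

End S.

Section S.
Context {R : realType} {D X : finType}.

Definition nonneg (p : jdist R D X) := forall d x y, 0 <= p d x y.

Lemma push_ge0 p (K : kernel R D X) d x y : nonneg p -> is_kernel K -> 0 <= push p K d x y.
Proof.
move=> hp [hK _]; rewrite /push; apply: sumr_ge0 => x0 _; apply: sumr_ge0 => y0 _.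
by apply: mulr_ge0.
Qed.

Lemma push_margD p (K : kernel R D X) d : is_kernel K ->
  \sum_x' \sum_y' push p K d x' y' = marg_D p d.
Proof.
move=> [_ hK]; rewrite /push /marg_D sum_pull; apply: eq_bigr => x _.
rewrite sum_pull; apply: eq_bigr => y _.
under eq_bigr => i _ do rewrite -big_distrr /=.
by rewrite -big_distrr /= hK mulr1.
Qed.

Lemma sum_DYhat p (K : kernel R D X) d : is_kernel K ->
  \sum_y marg_DYhat p K d y = marg_D p d.
Proof.
move=> hK; rewrite /marg_DYhat /marg_YD exchange_big /=; exact: push_margD.
Qed.

Lemma DYhat_ge0 p (K : kernel R D X) d y : nonneg p -> is_kernel K -> 0 <= marg_DYhat p K d y.
Proof. by move=> hp hK; apply: sumr_ge0 => x _; apply: push_ge0. Qed.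

Lemma DYhat_le p (K : kernel R D X) d y : nonneg p -> is_kernel K ->
  marg_DYhat p K d y <= marg_D p d.
Proof.
move=> hp hK; rewrite -(sum_DYhat p K d hK); apply: (@le_sum_term _ _ (fun y => marg_DYhat p K d y) y).
by move=> i; apply: DYhat_ge0.
Qed.

Definition SD (q p : jdist R D X) d := \sum_x \sum_y `|q d x y - p d x y|.

Lemma margD_diff q p d : `|marg_D q d - marg_D p d| <= SD q p d.
Proof.
rewrite /marg_D /SD -sumrB; apply: (le_trans (ler_norm_sum _ _ _)).
apply: ler_sum => x _; rewrite -sumrB; exact: ler_norm_sum.
Qed.

Lemma ker_le1 (K : kernel R D X) d x y y' : is_kernel K -> \sum_x' K d x y x' y' <= 1.
Proof.
move=> [h0 h1]; rewrite -(h1 d x y); apply: ler_sum => x' _.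
by apply: (@le_sum_term _ _ (fun b => K d x y x' b) y') => b; apply: h0.
Qed.

Lemma DYhat_diff q p (K : kernel R D X) d y : is_kernel K ->
  `|marg_DYhat q K d y - marg_DYhat p K d y| <= SD q p d.
Proof.
move=> hK; rewrite /marg_DYhat /marg_YD /push /SD -sumrB.
under eq_bigr => x' _ do rewrite -sumrB.
under eq_bigr => x' _ do under eq_bigr => x _ do rewrite -sumrB.
rewrite exchange_big /=.
under eq_bigr => x _ do rewrite exchange_big /=.
apply: (le_trans (ler_norm_sum _ _ _)); apply: ler_sum => x _.
apply: (le_trans (ler_norm_sum _ _ _)); apply: ler_sum => y0 _.
under eq_bigr => x' _ do rewrite -mulrBl.
rewrite -big_distrr /= normrM.
have h0 : 0 <= \sum_x' K d x y0 x' y by apply: sumr_ge0 => x' _; case: hK => h _; apply: h.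
rewrite (ger0_norm h0); apply: ler_piMr => //; exact: ker_le1.
Qed.


Definition ad (q p : jdist R D X) : jdist R D X := fun d x y => `|q d x y - p d x y|.

Lemma push_diff q p (K : kernel R D X) d x' y' : is_kernel K ->
  `|push q K d x' y' - push p K d x' y'| <= push (ad q p) K d x' y'.
Proof.
move=> [h0 _]; rewrite /push -sumrB; apply: (le_trans (ler_norm_sum _ _ _)).
apply: ler_sum => x _; rewrite -sumrB; apply: (le_trans (ler_norm_sum _ _ _)).
apply: ler_sum => y _; rewrite -mulrBl normrM (ger0_norm (h0 _ _ _ _ _)) //.
Qed.

Lemma delta_pert q p (K : kernel R D X) : is_kernel K ->
  Delta (marg_XY q) (marg_XY (push q K)) <=
  Delta (marg_XY p) (marg_XY (push p K)) + 2 * \sum_d SD q p d.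
Proof.
move=> hK.
have E1 : \sum_x \sum_y `|marg_XY q x y - marg_XY p x y| <= \sum_d SD q p d.
  rewrite /SD -sum_pull; apply: ler_sum => x _; apply: ler_sum => y _.
  rewrite /marg_XY -sumrB; exact: ler_norm_sum.
have E2 : \sum_x \sum_y `|marg_XY (push q K) x y - marg_XY (push p K) x y| <= \sum_d SD q p d.
  have -> : \sum_d SD q p d = \sum_d \sum_x' \sum_y' push (ad q p) K d x' y'.
    by apply: eq_bigr => d _; rewrite push_margD.
  rewrite -sum_pull; apply: ler_sum => x _; apply: ler_sum => y _.
  rewrite /marg_XY -sumrB; apply: (le_trans (ler_norm_sum _ _ _)).
  by apply: ler_sum => d _; apply: push_diff.
rewrite /Delta.
have E3 : \sum_x \sum_y `|marg_XY q x y - marg_XY (push q K) x y| <=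
   \sum_x \sum_y (`|marg_XY p x y - marg_XY (push p K) x y| +
                  (`|marg_XY q x y - marg_XY p x y| + `|marg_XY (push q K) x y - marg_XY (push p K) x y|)).
  apply: ler_sum => x _; apply: ler_sum => y _.
  set a := marg_XY q x y; set b := marg_XY (push q K) x y.
  set c := marg_XY p x y; set e := marg_XY (push p K) x y.
  have -> : a - b = (c - e) + ((a - c) - (b - e)) by ring.
  apply: (le_trans (ler_normD _ _)); rewrite lerD2l.
  apply: (le_trans (ler_normB _ _)); done.
apply: (le_trans E3).
under eq_bigr => x _ do rewrite big_split /=.
rewrite big_split /= lerD2l.
under eq_bigr => x _ do rewrite big_split /=.
rewrite big_split /=.
lra.
Qed.

End S.

Section J.
Context {R : realType}.

Lemma J0 (a : R) : J a 0 = 1.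
Proof. by rewrite /J invr0 mulr0 sub0r normrN normr1. Qed.

Lemma J_inv_bound (u b eps : R) : 0 < u -> 0 < b -> J u b <= eps -> b^-1 <= (1 + eps) / u.
Proof.
move=> hu hb; rewrite /J => /ler_normlP [_ h].
rewrite ler_pdivlMr // mulrC; lra.
Qed.

Lemma cond_diff (aq ap mq mp gamma d : R) :
  0 < gamma -> gamma <= ap -> ap <= mp -> `|aq - ap| <= d -> `|mq - mp| <= d ->
  d <= gamma / 2 -> `|aq / mq - ap / mp| <= 4 * d / gamma.
Proof.
move=> hg hga hap e1 e2 hd.
move: (e1) (e2) => /ler_normlP [h1 h2] /ler_normlP [h3 h4].
have hmp : 0 < mp by lra.
have hmq : gamma / 2 <= mq by lra.
have hmq0 : 0 < mq by lra.
have hd0 : 0 <= d by lra.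
have -> : aq / mq - ap / mp = ((aq - ap) * mp - ap * (mq - mp)) / (mq * mp).
  by field; apply/andP; split; rewrite gt_eqF.
rewrite normrM normfV (gtr0_norm (_ : 0 < mq * mp)) ?mulr_gt0 // ler_pdivrMr ?mulr_gt0 //.
set g := d / gamma.
have hg1 : g * gamma = d by rewrite /g divfK ?gt_eqF.
have hg0 : 0 <= g by rewrite /g divr_ge0 // ltW.
have -> : 4 * d / gamma = 4 * g by rewrite /g mulrA.
have hN : `|(aq - ap) * mp - ap * (mq - mp)| <= 2 * d * mp.
  apply: (le_trans (ler_normB _ _)); rewrite !normrM (gtr0_norm hmp) (ger0_norm (_ : 0 <= ap)); last lra.
  have := ler_wpM2r (ltW hmp) e2.
  have := ler_wpM2l (_ : 0 <= ap) e1.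
  move=> f1 f2; nra.
apply: (le_trans hN).
have : 2 * d * mp = 2 * (g * gamma) * mp by rewrite hg1.
move=> ->.
have := ler_wpM2l hg0 hmq.
move=> f; nra.
Qed.

Lemma J_small (aq ap mq mp b eps gamma d : R) :
  0 < gamma -> gamma <= ap -> ap <= mp -> mp <= 1 -> `|aq - ap| <= d -> `|mq - mp| <= d ->
  d <= gamma / 2 -> 0 <= b -> 0 <= eps -> J (ap / mp) b <= eps ->
  J (aq / mq) b <= eps + 4 * d / gamma * (1 + eps) / gamma.
Proof.
move=> hg hga hap hm1 e1 e2 hd hb he hJ.
have hd0 : 0 <= d by have := normr_ge0 (aq - ap); lra.
have h1e : 0 <= 1 + eps by lra.
have hr0 : 0 <= 4 * d / gamma * (1 + eps) / gamma.
  apply: divr_ge0 (ltW hg); apply: mulr_ge0 h1e; apply: divr_ge0 (ltW hg); exact: mulr_ge0.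
have [eb|hb0] := eqVneq b 0.
  by move: hJ; rewrite eb !J0 => h; lra.
have hbp : 0 < b by rewrite lt_def hb0 hb.
have hmp : 0 < mp by lra.
set u := ap / mp; set v := aq / mq.
have hu : gamma <= u.
  rewrite /u ler_pdivlMr //; have : gamma * mp <= gamma * 1 by rewrite ler_pM2l.
  lra.
have hvu := @cond_diff _ _ _ _ _ _ hg hga hap e1 e2 hd.
have hib := @J_inv_bound _ _ _ (lt_le_trans hg hu) hbp hJ.
have hib2 : b^-1 <= (1 + eps) / gamma.
  apply: (le_trans hib); rewrite ler_pM2l ?lef_pV2 ?posrE //; lra.
rewrite /J.
have -> : v / b - 1 = (u / b - 1) + (v - u) * b^-1 by ring.
apply: (le_trans (ler_normD _ _)); apply: lerD; first exact: hJ.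
have hib0 : 0 <= b^-1 by rewrite invr_ge0 ltW.
rewrite normrM (ger0_norm hib0).
have := ler_pM (normr_ge0 _) hib0 hvu hib2.
by move=> h; apply: (le_trans h); rewrite !mulrA.
Qed.

Lemma J_large (v u b eps gamma : R) :
  0 < gamma -> gamma <= u -> 0 <= v <= 1 -> 0 <= b -> J u b <= eps ->
  J v b <= 1 + (1 + eps) / gamma.
Proof.
move=> hg hu /andP [hv0 hv1] hb hJ.
have he : 0 <= eps by apply: le_trans hJ; apply: normr_ge0.
have h0 : 0 <= (1 + eps) / gamma by rewrite divr_ge0 ?ltW //; lra.
have [eb|hb0] := eqVneq b 0; first by rewrite eb J0; lra.
have hbp : 0 < b by rewrite lt_def hb0 hb.
have hib := @J_inv_bound _ _ _ (lt_le_trans hg hu) hbp hJ.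
have hib2 : b^-1 <= (1 + eps) / gamma.
  apply: (le_trans hib); rewrite ler_pM2l ?lef_pV2 ?posrE //; lra.
rewrite /J; apply: (le_trans (ler_normB _ _)); rewrite normr1 addrC lerD2l.
have hib0 : 0 <= b^-1 by rewrite invr_ge0 ltW.
rewrite normrM (ger0_norm hib0) (ger0_norm hv0).
apply: le_trans hib2; rewrite -[X in _ <= X]mul1r; exact: ler_wpM2r.
Qed.

End J.

Section F.
Context {R : realType} {D X : finType}.

Lemma margD_le1 (p : jdist R D X) d : nonneg p -> \sum_d \sum_x \sum_y p d x y = 1 ->
  marg_D p d <= 1.
Proof.
move=> hp h1; rewrite -h1; apply: (@le_sum_term _ _ (marg_D p) d) => d'.
by apply: sumr_ge0 => x _; apply: sumr_ge0 => y _; apply: hp.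
Qed.

Lemma cond_in01 (q : jdist R D X) (K : kernel R D X) y d : nonneg q -> is_kernel K ->
  0 <= cond_Yhat_D q K y d <= 1.
Proof.
move=> hq hK; rewrite /cond_Yhat_D.
have ha := DYhat_ge0 q K d y hq hK; have hl := DYhat_le q K d y hq hK.
have [e|hne] := eqVneq (marg_D q d) 0; first by rewrite e invr0 mulr0 lexx ler01.
have hm : 0 < marg_D q d by rewrite lt_def hne /=; apply: le_trans hl.
apply/andP; split; first exact: divr_ge0 ha (ltW hm).
by rewrite ler_pdivrMr // mul1r.
Qed.

Lemma cond_ge (p : jdist R D X) (K : kernel R D X) y d gamma : nonneg p -> is_kernel K ->
  marg_D p d <= 1 -> 0 < gamma -> gamma <= marg_DYhat p K d y ->
  gamma <= cond_Yhat_D p K y d.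
Proof.
move=> hp hK hm1 hg hga; rewrite /cond_Yhat_D.
have hl := DYhat_le p K d y hp hK.
have hm : 0 < marg_D p d by lra.
rewrite ler_pdivlMr //; have : gamma * marg_D p d <= gamma * 1 by rewrite ler_pM2l.
lra.
Qed.

Lemma SD_le (q p : jdist R D X) d t : (forall d x y, `|q d x y - p d x y| <= t) ->
  SD q p d <= #|X|%:R * (2 * t).
Proof.
move=> h; apply: (le_trans (y := \sum_(x : X) (2 * t))).
  by apply: ler_sum => x _; rewrite big_bool /= -[2]/(1 + 1) mulrDl mul1r lerD.
rewrite sumr_const -mulr_natl le_eqVlt; apply/orP; left; apply/eqP; ring.
Qed.

Lemma SD_tot (q p : jdist R D X) t : (forall d x y, `|q d x y - p d x y| <= t) ->
  \sum_d SD q p d <= #|{: D * X * bool}|%:R * t.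
Proof.
move=> h; apply: (le_trans (y := \sum_(b : D * X * bool) t)).
  by rewrite /SD -(sum_curry (fun d x y => `|q d x y - p d x y|)); apply: ler_sum.
rewrite sumr_const -mulr_natl le_eqVlt; apply/orP; left; apply/eqP; ring.
Qed.

Lemma SD_tot2 (q p : jdist R D X) : nonneg q -> nonneg p ->
  \sum_d \sum_x \sum_y q d x y = 1 -> \sum_d \sum_x \sum_y p d x y = 1 ->
  \sum_d SD q p d <= 2.
Proof.
move=> hq hp e1 e2.
apply: (le_trans (y := \sum_d \sum_x \sum_y (q d x y + p d x y))).
  apply: ler_sum => d _; apply: ler_sum => x _; apply: ler_sum => y _.
  apply: (le_trans (ler_normB _ _)); rewrite !ger0_norm //.
rewrite le_eqVlt; apply/orP; left; apply/eqP.
under eq_bigr => d _ do (under eq_bigr => x _ do rewrite big_split /=; rewrite big_split /=).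
by rewrite big_split /= e1 e2.
Qed.


Lemma det_small (p q : jdist R D X) (K : kernel R D X) (gamma eps mu t : R) (pYT : bool -> R) :
  0 < gamma -> 0 <= eps -> nonneg p -> \sum_d \sum_x \sum_y p d x y = 1 -> nonneg q ->
  is_kernel K -> (forall y, 0 <= pYT y) -> 0 <= t -> #|X|%:R * (2 * t) <= gamma / 2 ->
  (forall d x y, `|q d x y - p d x y| <= t) ->
  (forall y d, J (cond_Yhat_D p K y d) (pYT y) <= eps) ->
  Delta (marg_XY p) (marg_XY (push p K)) <= mu ->
  (forall d y, gamma <= marg_DYhat p K d y) ->
  (forall y d, J (cond_Yhat_D q K y d) (pYT y) <= eps + 4 * (#|X|%:R * (2 * t)) / gamma * (1 + eps) / gamma)
  /\ Delta (marg_XY q) (marg_XY (push q K)) <= mu + 2 * (#|{: D * X * bool}|%:R * t).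
Proof.
move=> hg he hp hp1 hq hK hY ht hsm hc hJ hD hga; split.
  move=> y d; rewrite /cond_Yhat_D.
  have hsd := SD_le q p d t hc.
  apply: (J_small _ _ _ _ _ _ _ _ hg (hga d y) (DYhat_le p K d y hp hK) (margD_le1 p d hp hp1)) => //.
  1-3: first [exact: hY | exact: hJ | exact: (le_trans (DYhat_diff q p K d y hK) hsd) | exact: (le_trans (margD_diff q p d) hsd)].
apply: (le_trans (delta_pert q p K hK)); apply: lerD hD _; rewrite ler_pM2l //.
exact: SD_tot.
Qed.

Lemma det_large (p q : jdist R D X) (K : kernel R D X) (gamma eps mu : R) (pYT : bool -> R) :
  0 < gamma -> nonneg p -> \sum_d \sum_x \sum_y p d x y = 1 -> nonneg q ->
  \sum_d \sum_x \sum_y q d x y = 1 ->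
  is_kernel K -> (forall y, 0 <= pYT y) ->
  (forall y d, J (cond_Yhat_D p K y d) (pYT y) <= eps) ->
  Delta (marg_XY p) (marg_XY (push p K)) <= mu ->
  (forall d y, gamma <= marg_DYhat p K d y) ->
  (forall y d, J (cond_Yhat_D q K y d) (pYT y) <= 1 + (1 + eps) / gamma)
  /\ Delta (marg_XY q) (marg_XY (push q K)) <= mu + 4.
Proof.
move=> hg hp hp1 hq hq1 hK hY hJ hD hga; split.
  move=> y d.
  apply: (J_large _ _ _ _ _ hg (cond_ge p K y d gamma hp hK (margD_le1 p d hp hp1) hg (hga d y))).
  - exact: cond_in01.
  - exact: hY.
  - exact: hJ.
apply: (le_trans (delta_pert q p K hK)).
have := SD_tot2 q p hq hp hq1 hp1; lra.
Qed.

End F.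

Section G.
Context {R : realType}.

Lemma beta_bound (A beta c t : R) (n : nat) : 0 <= A -> (2 <= n)%N -> 0 < beta < 1 ->
  c = 8 * (1 + 2 * A / ln 2) ->
  t = c * Num.sqrt (ln (n%:R / beta) / n%:R) ->
  2 * A * expR (- (n%:R * t ^+ 2) / 8) <= beta.
Proof.
move=> hA hn /andP [hb0 hb1] ec et.
have hn0 : 0 < (n%:R : R) by rewrite ltr0n; apply: leq_trans hn.
have hn2 : (2 : R) <= n%:R by rewrite ler_nat.
have hL2 : 0 < ln (2 : R) by apply: ln_gt0; lra.
set L := ln (n%:R / beta).
have hnb : 2 <= n%:R / beta.
  rewrite ler_pdivlMr //; have : n%:R * beta <= n%:R * 1 by rewrite ler_pM2l // ltW.
  lra.
have hLL2 : ln 2 <= L by rewrite /L ler_ln // posrE; lra.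
have hL0 : 0 < L by lra.
have ht2 : n%:R * t ^+ 2 = c ^+ 2 * L.
  have hLn : 0 <= L / n%:R by rewrite divr_ge0 // ltW.
  by rewrite et exprMn sqr_sqrtr // /L; field; rewrite (gt_eqF hn0).
have hc1 : 1 <= c.
  have : 0 <= 2 * A / ln 2 by rewrite divr_ge0 ?mulr_ge0 // ltW.
  rewrite ec; lra.
have hcc : c * L <= c ^+ 2 * L by rewrite expr2 ler_pM2r // ler_peMl //; lra.
have hq : 1 <= L / ln 2 by rewrite ler_pdivlMr // mul1r.
have hcL : c * L = 8 * L + 16 * A * (L / ln 2).
  by rewrite ec; field; rewrite (gt_eqF hL2).
have hAq : A <= A * (L / ln 2) by rewrite ler_peMr.
have hexp : - (n%:R * t ^+ 2) / 8 <= - L - 2 * A by rewrite ht2; lra.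
have E1 : expR (- L) = beta / n%:R.
  rewrite expRN /L lnK ?posrE ?divr_gt0 // invf_div //.
have E2 : 2 * A * expR (- (2 * A)) <= 1.
  rewrite expRN; have := expR_ge1Dx (2 * A); move=> h.
  have hp : 0 < expR (2 * A) := expR_gt0 _.
  rewrite ler_pdivrMr // mul1r; lra.
apply: (le_trans (y := 2 * A * expR (- L - 2 * A))).
  by rewrite ler_wpM2l ?mulr_ge0 // ler_expR.
rewrite expRD E1.
have hbn : beta / n%:R <= beta.
  by rewrite ler_pdivrMr // ler_peMr // ?ltW //; lra.
have h0 : 0 <= beta / n%:R by rewrite divr_ge0 ?ltW.
have := ler_wpM2l h0 E2.
have h3 : 0 <= expR (- (2 * A)) := expR_ge0 _.
rewrite mulr1; move=> h4.
have -> : 2 * A * (beta / n%:R * expR (- (2 * A))) = beta / n%:R * (2 * A * expR (- (2 * A))) by ring.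
lra.
Qed.

End G.

Lemma n1_fail {R : realType} {D X : finType} (s : {ffun 'I_1 -> D * X * bool}) :
  ~ (forall y d, 0 < marg_YD (empirical R s) y d).
Proof.
move=> h; have := h (~~ (s ord0).2) (s ord0).1.1.
rewrite /marg_YD big1 ?ltxx // => x _.
rewrite /empirical count_sum big_ord1.
have -> : (s ord0 == ((s ord0).1.1, x, ~~ (s ord0).2)) = false.
  by apply/eqP => /(congr1 snd) /=; case: (s ord0).2.
by rewrite mul0r.
Qed.

Section P.
Context {R : realType} {D X : finType}.
Notation atom := (D * X * bool)%type.
Variable q : jdist R D X.
Hypothesis hq : is_jdist q.
Variable n : nat.
Notation smp := {ffun 'I_n -> atom}.

Definition Wt (s : smp) := \prod_(i < n) qa q (s i).
Definition Zc (s : smp) (a : atom) : R := #|[set i | s i == a]|%:R - n%:R * qa q a.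

Lemma qa_ge0 b : 0 <= qa q b.
Proof. by case: hq => h _; apply: h. Qed.

Lemma qa_sum : \sum_b qa q b = 1.
Proof. by rewrite /qa sum_curry; case: hq. Qed.

Lemma qa_le1 a : qa q a <= 1.
Proof. rewrite -qa_sum; apply: (@le_sum_term _ _ (qa q) a) => b; exact: qa_ge0. Qed.

Lemma Wt_ge0 s : 0 <= Wt s.
Proof. by apply: prodr_ge0 => i _; apply: qa_ge0. Qed.

Lemma Wt_sum : \sum_s Wt s = 1.
Proof.
transitivity (\sum_s Wt s * \prod_(i < n) (fun _ => 1 : R) (s i)).
  by apply: eq_bigr => s _; rewrite big1_eq mulr1.
apply: (eq_trans (expect_prod q n (fun _ => 1))).
by under eq_bigr => b _ do rewrite mulr1; rewrite qa_sum expr1n.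
Qed.

Lemma Z_sum s a : Zc s a = \sum_i ((s i == a)%:R - qa q a).
Proof.
by rewrite /Zc count_sum sumrB sumr_const card_ord mulr_natl.
Qed.

Lemma qa_pick a : \sum_b qa q b * (b == a)%:R = qa q a.
Proof.
rewrite (bigD1 a) //= eqxx mulr1 big1 ?addr0 // => b /negbTE ->; by rewrite mulr0.
Qed.

Lemma mgf_one (lam : R) a : `|lam| <= 1/2 ->
  \sum_b qa q b * expR (lam * ((b == a)%:R - qa q a)) <= expR (2 * lam ^+ 2).
Proof.
move=> hl.
apply: (le_trans _ (expR_ge1Dx _)).
have -> : 1 + 2 * lam ^+ 2 = \sum_b qa q b * (1 + lam * ((b == a)%:R - qa q a) + 2 * lam ^+ 2).
  under eq_bigr => b _ do rewrite mulrDr mulrDr.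
  rewrite !big_split /= -!mulr_suml qa_sum mul1r.
  under eq_bigr => b _ do rewrite mulrCA mulrBr.
  rewrite -mulr_sumr sumrB qa_pick -mulr_suml qa_sum; ring.
apply: ler_sum => b _; apply: ler_wpM2l; first exact: qa_ge0.
have he : `|(b == a)%:R - qa q a| <= 1.
  have := qa_ge0 a; have := qa_le1 a.
  by case: (b == a) => /= h1 h2; rewrite ler_norml; apply/andP; split; lra.
have hx : `|lam * ((b == a)%:R - qa q a)| <= 1/2.
  rewrite normrM; have := ler_pM (normr_ge0 _) (normr_ge0 _) hl he; lra.
apply: (le_trans (@expR_le_quad _ _ hx)); rewrite lerD2l.
rewrite exprMn ler_wpM2l //.
rewrite -[X in _ <= X]mulr1 ler_wpM2l ?sqr_ge0 //.
rewrite -real_normK ?num_real //.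
have h0 := normr_ge0 ((b == a)%:R - qa q a); rewrite expr2; nra.
Qed.

Lemma mgf (lam : R) a : `|lam| <= 1/2 ->
  \sum_s Wt s * expR (lam * Zc s a) <= expR (n%:R * (2 * lam ^+ 2)).
Proof.
move=> hl.
under eq_bigr => s _ do rewrite Z_sum mulr_sumr expR_sum.
have E := expect_prod q n (fun b => expR (lam * ((b == a)%:R - qa q a))).
rewrite /= in E; rewrite /Wt E expRM_natl; apply: lerXn2r; rewrite ?nnegrE ?expR_ge0 //.
  by apply: sumr_ge0 => b _; rewrite mulr_ge0 ?expR_ge0 ?qa_ge0.
exact: mgf_one.
Qed.


Lemma mgf_shift (lam c : R) a : `|lam| <= 1/2 ->
  \sum_s Wt s * expR (lam * Zc s a - c) <= expR (n%:R * (2 * lam ^+ 2) - c).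
Proof.
move=> hl.
under eq_bigr => s _ do rewrite expRD mulrA.
rewrite -mulr_suml expRD ler_wpM2r ?expR_ge0 //; exact: mgf.
Qed.

Definition good (t : R) (s : smp) := [forall a, `|Zc s a| <= n%:R * t].

Definition Gf (t : R) (s : smp) :=
  \sum_a (expR (t / 4 * Zc s a - t / 4 * (n%:R * t)) + expR (- (t / 4) * Zc s a - t / 4 * (n%:R * t))).

Lemma Gf_ge0 t s : 0 <= Gf t s.
Proof. by apply: sumr_ge0 => a _; rewrite addr_ge0 ?expR_ge0. Qed.

Lemma Gf_bad t s : 0 <= t -> ~~ good t s -> 1 <= Gf t s.
Proof.
move=> ht; rewrite /good negb_forall => /existsP [a]; rewrite -ltNge => ha.
apply: (le_trans _ (@le_sum_term _ _ (fun a => expR (t / 4 * Zc s a - t / 4 * (n%:R * t)) + expR (- (t / 4) * Zc s a - t / 4 * (n%:R * t))) a _)); last first.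
  by move=> b; rewrite addr_ge0 ?expR_ge0.
have ht4 : 0 <= t / 4 by rewrite divr_ge0.
move: ha; rewrite ltr_normr => /orP [] h.
- have : 0 <= t / 4 * Zc s a - t / 4 * (n%:R * t).
    rewrite -mulrBr mulr_ge0 // subr_ge0 ltW //.
  move=> h0; have h1 := expR_ge1Dx (t / 4 * Zc s a - t / 4 * (n%:R * t)).
  have h2 := expR_ge0 (- (t / 4) * Zc s a - t / 4 * (n%:R * t)); lra.
- have : 0 <= - (t / 4) * Zc s a - t / 4 * (n%:R * t).
    rewrite mulNr -mulrN -mulrBr mulr_ge0 // subr_ge0 ltW //.
  move=> h0; have h1 := expR_ge1Dx (- (t / 4) * Zc s a - t / 4 * (n%:R * t)).
  have h2 := expR_ge0 (t / 4 * Zc s a - t / 4 * (n%:R * t)); lra.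
Qed.

Lemma bad_bound (t : R) : 0 <= t <= 2 ->
  \sum_(s | ~~ good t s) Wt s <= 2 * #|{: atom}|%:R * expR (- (n%:R * t ^+ 2) / 8).
Proof.
move=> /andP [ht0 ht2].
have hl1 : `|t / 4| <= 1 / 2 by rewrite ger0_norm ?divr_ge0 //; lra.
have hl2 : `|- (t / 4)| <= 1 / 2 by rewrite normrN.
have ee : forall lam : R, lam ^+ 2 = (t / 4) ^+ 2 ->
    expR (n%:R * (2 * lam ^+ 2) - t / 4 * (n%:R * t)) = expR (- (n%:R * t ^+ 2) / 8).
  by move=> lam ->; congr expR; rewrite !expr2; field.
apply: (le_trans (y := \sum_s Wt s * Gf t s)).
  rewrite [X in _ <= X](bigID (fun s => ~~ good t s)) /=.
  apply: (le_trans (y := \sum_(s | ~~ good t s) Wt s * Gf t s)).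
    apply: ler_sum => s hs; rewrite -[X in X <= _]mulr1 ler_wpM2l ?Wt_ge0 //.
    exact: Gf_bad.
  rewrite lerDl; apply: sumr_ge0 => s _; rewrite mulr_ge0 ?Wt_ge0 ?Gf_ge0 //.
rewrite /Gf.
under eq_bigr => s _ do rewrite mulr_sumr.
rewrite exchange_big /=.
under eq_bigr => a _ do (under eq_bigr => s _ do rewrite mulrDr; rewrite big_split /=).
apply: (le_trans (y := \sum_(a : atom) (expR (- (n%:R * t ^+ 2) / 8) + expR (- (n%:R * t ^+ 2) / 8)))).
  apply: ler_sum => a _; apply: lerD.
    by rewrite -(ee (t / 4)) //; apply: mgf_shift.
  rewrite -(ee (- (t / 4))); [exact: mgf_shift | by rewrite sqrrN].
rewrite sumr_const -[_ *+ #|_|]mulr_natl.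
rewrite le_eqVlt; apply/orP; left; apply/eqP; ring.
Qed.


Lemma prob_lb (g : pred smp) (Ev : smp -> Prop) (beta : R) :
  (forall s, g s -> Ev s) -> \sum_(s | ~~ g s) Wt s <= beta -> 1 - beta <= sample_prob q Ev.
Proof.
move=> hg hb; rewrite /sample_prob.
have e := Wt_sum; rewrite (bigID g) /= in e.
have : \sum_(s | g s) Wt s <= \sum_(s | `[< Ev s >]) Wt s.
  rewrite big_mkcond [X in _ <= X]big_mkcond; apply: ler_sum => s _.
  case: ifP => gs; first by rewrite (asboolT (hg s gs)).
  by case: ifP => _ //; apply: Wt_ge0.
rewrite /Wt; lra.
Qed.

Lemma emp_close (t : R) s : (0 < n)%N -> good t s ->
  forall d x y, `|q d x y - empirical R s d x y| <= t.
Proof.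
move=> hn /forallP h d x y; have := h (d, x, y); rewrite /Zc /empirical /qa /=.
have hn' : 0 < (n%:R : R) by rewrite ltr0n.
set N := (#|_|%:R : R) => hz.
have -> : q d x y - N / n%:R = - (N - n%:R * q d x y) / n%:R by field; rewrite gt_eqF.
by rewrite normrM normfV normrN (gtr0_norm hn') ler_pdivrMr // [t * _]mulrC.
Qed.

End P.

Theorem proposition3 (R : realType) (D X : finType) (gamma eps : R) :
  0 < gamma -> 0 <= eps ->
  exists C : R, 0 < C /\
  forall (q : jdist R D X) (n : nat) (beta mu : R) (pYT : bool -> R)
         (M : jdist R D X -> kernel R D X),
    is_jdist q -> (0 < n)%N -> 0 < beta < 1 -> is_dist pYT ->
    (forall p, is_kernel (M p)) ->
    let rate := Num.sqrt (ln (n%:R / beta) / n%:R) in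
    1 - beta <= sample_prob q (fun s =>
      let p := @empirical R D X n s in
      let K := M p in
      ((forall y d, 0 < marg_YD p y d) ->
       (forall y d, J (cond_Yhat_D p K y d) (pYT y) <= eps) ->
       Delta (marg_XY p) (marg_XY (push p K)) <= mu ->
       (forall d y, gamma <= marg_DYhat p K d y) ->
       (forall y d, J (cond_Yhat_D q K y d) (pYT y) <= eps + C * rate) /\
       Delta (marg_XY q) (marg_XY (push q K)) <= mu + C * rate)).
Proof.
move=> hg he.
pose NX : R := #|X|%:R.
pose A : R := #|{: D * X * bool}|%:R.
pose c : R := 8 * (1 + 2 * A / ln 2).
pose tau : R := gamma / (4 * (NX + 1)).
pose B : R := 5 + (1 + eps) / gamma.
pose K1 : R := 8 * NX * (1 + eps) / gamma ^+ 2.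
pose Mc : R := B / tau + B + K1 + 2 * A + 1.
have hNX : 0 <= NX by rewrite /NX ler0n.
have hA : 0 <= A by rewrite /A ler0n.
have hL2 : 0 < ln (2 : R) by apply: ln_gt0; lra.
have hc : 1 <= c.
  have : 0 <= 2 * A / ln 2 by rewrite divr_ge0 ?mulr_ge0 // ltW.
  rewrite /c; lra.
have htau : 0 < tau by rewrite /tau divr_gt0 //; lra.
have htau4 : tau * (4 * (NX + 1)) = gamma by rewrite /tau divfK //; lra.
have hB1 : 0 <= (1 + eps) / gamma by rewrite divr_ge0 ?ltW //; lra.
have hB : 5 <= B by rewrite /B; lra.
have hBt : 0 <= B / tau by rewrite divr_ge0 ?ltW //; lra.
have hBt2 : B / tau * tau = B by rewrite divfK // gt_eqF.
have hK1 : 0 <= K1.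
  rewrite /K1; apply: divr_ge0; [apply: mulr_ge0; [apply: mulr_ge0|]; lra | apply: exprn_ge0; lra].
have hMc : 1 <= Mc by rewrite /Mc; lra.
exists (c * Mc); split; first by apply: mulr_gt0; lra.
move=> q n beta mu pYT M hq hn hb hpYT hM.
cbv zeta.
set rate := Num.sqrt (ln (n%:R / beta) / n%:R).
have hq0 : nonneg q by case: hq.
have hq1 := hq.2.
have hY : forall y, 0 <= pYT y by case: hpYT.
have hb' := hb; move/andP: hb' => [hb0 hb1].
have hrate : 0 <= rate by apply: sqrtr_ge0.
have [n1|n2] := leqP n 1%N.
  have e : n = 1%N by apply/eqP; rewrite eqn_leq n1 hn.
  subst n.
  apply: (prob_lb q hq 1 xpredT) => [s _ H1|].
    by exfalso; exact: (n1_fail s H1).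
  by rewrite big1 //; lra.
pose t := c * rate.
have ht0 : 0 <= t by rewrite /t mulr_ge0 //; lra.
have eC : c * Mc * rate = Mc * t by rewrite /t; ring.
rewrite eC.
case: (boolP ((t <= tau) && (t <= 2))) => [/andP [h1 h2] | hlarge].
  apply: (prob_lb q hq n (good q n t)) => [s hs H1 H2 H3 H4|]; last first.
    apply: (le_trans (bad_bound q hq n t _)); first by rewrite ht0 h2.
    exact: (beta_bound A beta c t n hA n2 hb erefl erefl).
  have hcl := emp_close q n t s hn hs.
  have hsm : NX * (2 * t) <= gamma / 2.
    rewrite -htau4.
    have : NX * t <= NX * tau by rewrite ler_wpM2l.
    lra.
  have [J1 D1] := det_small (empirical R s) q (M (empirical R s)) gamma eps mu t pYT hg he
      (@empirical_ge0 R D X n s) (empirical_total n s hn) hq0 (hM _) hY ht0 hsm hcl H2 H3 H4.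
  split.
    move=> y d; apply: (le_trans (J1 y d)); rewrite lerD2l.
    have -> : 4 * (NX * (2 * t)) / gamma * (1 + eps) / gamma = K1 * t.
      by rewrite /K1; field; rewrite gt_eqF.
    rewrite ler_wpM2r //; rewrite /Mc; lra.
  apply: (le_trans D1); rewrite lerD2l.
  have : 2 * A * t <= Mc * t by rewrite ler_wpM2r // /Mc; lra.
  rewrite mulrA; lra.
apply: (prob_lb q hq n xpredT) => [s _ H1 H2 H3 H4|]; last by rewrite big1 //; lra.
have [J1 D1] := det_large (empirical R s) q (M (empirical R s)) gamma eps mu pYT hg
    (@empirical_ge0 R D X n s) (empirical_total n s hn) hq0 hq1 (hM _) hY H2 H3 H4.
have hBM : B <= Mc * t.
  move: hlarge; rewrite negb_and -!ltNge => /orP [] hl.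
    have : B / tau * tau <= B / tau * t by rewrite ler_wpM2l // ltW.
    rewrite hBt2 => h; apply: (le_trans h); rewrite ler_wpM2r // /Mc; lra.
  have : B * 2 <= B * t by rewrite ler_wpM2l ?ltW //; lra.
  have : B * t <= Mc * t by rewrite ler_wpM2r // /Mc; lra.
  lra.
split.
  move=> y d; apply: (le_trans (J1 y d)); rewrite /B in hBM; lra.
apply: (le_trans D1); rewrite /B in hBM; lra.
Qed.
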